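(* Let $n\ge1$, $s_1\ge1$, let $P$ be any distribution on $[n]$ and let $U_n$ be the uniform distribution on $[n]$. For a multiset $\mathcal S$ of $s_1$ i.i.d. samples, let $S$ be the set of distinct elements of $\mathcal S$ and $U_n(S)=|S|/n$. Then for every $t\in\mathbb R$, $$\Pr_{\mathcal S\sim P^{\otimes s_1}}\big[U_n(S)\ge t\big]\le \Pr_{\mathcal S\sim U_n^{\otimes s_1}}\big[U_n(S)\ge t\big].$$
   Context: $P^{\otimes s_1}$ denotes drawing $s_1$ independent samples from $P$. *)

(* Defs.v *)
From mathcomp Require Import all_boot all_order all_algebra.
Set Implicit Arguments. Unset Strict Implicit. Unset Printing Implicit Defensive.
Import Order.TTheory GRing.Theory Num.Theory.
Local Open Scope ring_scope.

Definition is_distr (R : realFieldType) (n : nat) (P : 'I_n -> R) : Prop :=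
  (forall i, 0 <= P i) /\ \sum_(i < n) P i = 1.

Definition unif (R : realFieldType) (n : nat) : 'I_n -> R := fun _ => n%:R^-1.

(* Probability of an event E on s i.i.d. samples from P (the product
   distribution P^{\otimes s}); a sample is a function 'I_s -> 'I_n. *)
Definition prob_iid (R : realFieldType) (n s : nat) (P : 'I_n -> R)
  (E : pred {ffun 'I_s -> 'I_n}) : R :=
  \sum_(w : {ffun 'I_s -> 'I_n} | E w) \prod_(j < s) P (w j).

Definition sample_set (n s : nat) (w : {ffun 'I_s -> 'I_n}) : {set 'I_n} :=
  [set w j | j : 'I_s].

Definition Un_mass (R : realFieldType) (n : nat) (S : {set 'I_n}) : R :=
  #|S|%:R / n%:R.

(* Main.v *)
Require Import Defs.
From mathcomp Require Import all_boot all_order all_algebra.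
Import Order.TTheory GRing.Theory Num.Theory.
Set Implicit Arguments. Unset Strict Implicit. Unset Printing Implicit Defensive.
Local Open Scope ring_scope.


Lemma pow_diff_mono (R : realFieldType) (d s t : R) (m : nat) :
  0 <= d -> 0 <= s -> s <= t ->
  (s + d) ^+ m - s ^+ m <= (t + d) ^+ m - t ^+ m.
Proof.
move=> d0 s0 st; have t0 : 0 <= t by apply: le_trans st.
rewrite !subrXX [s + d]addrC [t + d]addrC !addrK; apply: ler_wpM2l => //.
apply: ler_sum => i _; apply: ler_pM.
- by apply: exprn_ge0; apply: addr_ge0.
- by apply: exprn_ge0.
- by apply: lerXn2r; rewrite ?nnegrE ?addr_ge0 // lerD2l.
- by apply: lerXn2r; rewrite ?nnegrE.
Qed.

Lemma pow_balance (R : realFieldType) (x y x' : R) (m : nat) :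
  0 <= y -> y <= x' -> x' <= x ->
  x' ^+ m + (x + y - x') ^+ m <= x ^+ m + y ^+ m.
Proof.
move=> y0 yx' x'x.
have := @pow_diff_mono R (x - x') y x' m ltac:(by rewrite subr_ge0) y0 yx'.
have -> : x' + (x - x') = x by rewrite addrC subrK.
have -> : y + (x - x') = x + y - x' by rewrite addrCA addrA.
by rewrite lerBrDl addrA lerBlDr [x^+m + _]addrC.
Qed.
Definition mrg (n : nat) (a b : 'I_n) (i : 'I_n) : 'I_n := if i == b then a else i.

Lemma mrg_neq_b n (a b i : 'I_n) : a != b -> mrg a b i != b.
Proof. move=> ab; rewrite /mrg; by case: (eqVneq i b). Qed.

Lemma card_merge n (a b : 'I_n) (S : {set 'I_n}) : a != b ->
  #|S| = (#|mrg a b @: S| + (a \in S) && (b \in S))%N.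
Proof.
move=> ab; case bS: (b \in S); last first.
  rewrite andbF addn0 card_in_imset // => i j iS jS; rewrite /mrg.
  have ib : i != b by apply: contraTneq iS => ->; rewrite bS.
  have jb : j != b by apply: contraTneq jS => ->; rewrite bS.
  by rewrite (negbTE ib) (negbTE jb).
have -> : mrg a b @: S = a |: (S :\ b).
  apply/setP => i; rewrite !inE; apply/imsetP/orP.
    case=> j jS ->; rewrite /mrg; case: (eqVneq j b) => [_|jb]; first by left.
    by right; rewrite jb jS.
  case=> [/eqP -> | /andP [ib iS]]; first by exists b => //; rewrite /mrg eqxx.
  by exists i => //; rewrite /mrg (negbTE ib).
rewrite cardsU1 (cardsD1 b S) bS andbT !inE ab /=.
by case: (a \in S) => /=; rewrite ?addn0 ?add0n ?addn1.
Qed.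

Lemma sum_mrg (R : realFieldType) n (a b : 'I_n) (p : 'I_n -> R) (c : 'I_n) :
  a != b -> c != b ->
  \sum_(i | mrg a b i == c) p i = if c == a then p a + p b else p c.
Proof.
move=> ab cb; case: (eqVneq c a) => [->|ca].
  rewrite (bigD1 a) /=; last by rewrite /mrg (negbTE ab).
  congr (_ + _); apply: big_pred1 => i /=; rewrite /mrg.
  case: (eqVneq i b) => [->|ib]; first by rewrite eqxx eq_sym ab.
  by rewrite andbN.
apply: big_pred1 => i /=; rewrite /mrg.
case: (eqVneq i b) => [->|ib]; first by rewrite eq_sym (negbTE ca) eq_sym (negbTE cb).
by [].
Qed.

Lemma prod_split (R : realFieldType) n s (a : 'I_n) (f : 'I_n -> R)
  (v g : 'I_s -> 'I_n) (c : 'I_n) :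
  (forall j, v j == a -> g j = c) -> (forall j, v j != a -> g j = v j) ->
  \prod_j f (g j) = f c ^+ #|[pred j | v j == a]| * \prod_(j | v j != a) f (v j).
Proof.
move=> h1 h2; rewrite (bigID (fun j => v j == a)) /=; congr (_ * _).
    by rewrite -prodr_const; apply: eq_big => // j /= /h1 ->.
by apply: eq_bigr => j /h2 ->.
Qed.

Lemma sample_set_mrg n s (a b : 'I_n) (w v : {ffun 'I_s -> 'I_n}) :
  (forall j, mrg a b (w j) = v j) -> sample_set v = mrg a b @: sample_set w.
Proof.
move=> h; apply/setP => i; apply/imsetP/imsetP.
  by case=> j _ ->; exists (w j); [apply/imsetP; exists j | rewrite h].
case=> x /imsetP [j _ ->] ->; by exists j; rewrite ?h.
Qed.

Lemma mono_phi (phi : nat -> bool) : (forall k, phi k -> phi k.+1) ->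
  forall k k', (k <= k')%N -> phi k -> phi k'.
Proof.
move=> h k k' /subnK <-; elim: (k' - k)%N => [|d IH] //= pk.
by rewrite addSn; apply: h; apply: IH.
Qed.

Definition Gf (R : realFieldType) n s (phi : nat -> bool) (p : 'I_n -> R) : R :=
  \sum_(w : {ffun 'I_s -> 'I_n}) (if phi #|sample_set w| then \prod_(j < s) p (w j) else 0).

Lemma step (R : realFieldType) n s (phi : nat -> bool) (p q : 'I_n -> R) (a b : 'I_n) :
  (forall k, phi k -> phi k.+1) ->
  a != b -> (forall i, 0 <= p i) -> (forall i, i != a -> i != b -> q i = p i) ->
  q a + q b = p a + p b -> (forall m, q a ^+ m + q b ^+ m <= p a ^+ m + p b ^+ m) ->
  Gf s phi p <= Gf s phi q.
Proof.
move=> phimono ab p0 qp qab qpow.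
pose mf := fun w : {ffun 'I_s -> 'I_n} => [ffun j => mrg a b (w j)].
pose Q := fun v : {ffun 'I_s -> 'I_n} => [forall j, v j != b].
have hQ : forall w, true -> Q (mf w).
  by move=> w _; apply/forallP => j; rewrite ffunE mrg_neq_b.
rewrite /Gf (partition_big mf Q) // [X in _ <= X](partition_big mf Q) //.
apply: ler_sum => v /forallP vb.
pose fam := family (fun j => [pred i | mrg a b i == v j]).
have efam : forall w, (true && (mf w == v)) = (w \in fam).
  move=> w /=; apply/eqP/familyP => [<- j | H]; first by rewrite inE ffunE.
  by apply/ffunP => j; rewrite ffunE; have := H j; rewrite inE => /eqP.
rewrite !(eq_bigl _ _ efam).
have famE : forall w, w \in fam -> forall j, mrg a b (w j) = v j.
  by move=> w /familyP H j; have := H j; rewrite inE => /eqP.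
set k := #|sample_set v|.
have cardw : forall w, w \in fam ->
   #|sample_set w| = (k + (a \in sample_set w) && (b \in sample_set w))%N.
  move=> w /famE H; rewrite /k (sample_set_mrg H); exact: card_merge.
have Tot : forall r : 'I_n -> R, \sum_(w in fam) \prod_j r (w j) =
    \prod_j (if v j == a then r a + r b else r (v j)).
  move=> r; transitivity (\prod_j \sum_(i | mrg a b i == v j) r i); last first.
    by apply: eq_bigr => j _; rewrite sum_mrg.
  by rewrite (bigA_distr_big_dep _ (fun j i => r i)).
have Toteq : \sum_(w in fam) \prod_j q (w j) = \sum_(w in fam) \prod_j p (w j).
  rewrite !Tot; apply: eq_bigr => j _; rewrite qab; case: ifP => // /negbT va.
  by rewrite qp.
have pk_mono := mono_phi phimono.
case pk: (phi k).
  have allin : forall w, w \in fam -> phi #|sample_set w|.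
    by move=> w wf; apply: (pk_mono k) => //; rewrite cardw // leq_addr.
  rewrite (eq_bigr (fun w : {ffun 'I_s -> 'I_n} => \prod_j p (w j))); last by move=> w /allin ->.
  rewrite [X in _ <= X](eq_bigr (fun w : {ffun 'I_s -> 'I_n} => \prod_j q (w j))); last by move=> w /allin ->.
  by rewrite Toteq.
case pk1: (phi k.+1); last first.
  have allout : forall w, w \in fam -> phi #|sample_set w| = false.
    move=> w wf; apply: negbTE; apply: contraFN pk1 => h; apply: (pk_mono _ _ _ h).
    by rewrite cardw // -addn1 leq_add2l; case: (_ && _).
  by rewrite !big1 // => w /allout ->.
have midE : forall (r : 'I_n -> R) w, w \in fam ->
   (if phi #|sample_set w| then \prod_j r (w j) else 0) =
   (if (a \in sample_set w) && (b \in sample_set w) then \prod_j r (w j) else 0).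
  by move=> r w wf; rewrite cardw //; case: (_ && _); rewrite ?addn0 ?pk ?addn1 ?pk1.
rewrite (eq_bigr _ (midE p)) (eq_bigr _ (midE q)).
case: (boolP [exists j, v j == a]) => [/existsP [j0 vj0] | /existsPn noa]; last first.
  have nob : forall w, w \in fam -> b \notin sample_set w.
    move=> w wf; apply/imsetP => [[j _ wjb]]; have := famE _ wf j; rewrite -wjb /mrg eqxx => vja.
    by move: (noa j); rewrite -vja eqxx.
  by rewrite !big1 // => w /nob /negbTE ->; rewrite andbF.
set wb := [ffun j => if v j == a then b else v j].
have vfam : v \in fam by apply/familyP => j; rewrite inE /mrg (negbTE (vb j)).
have wbfam : wb \in fam.
  apply/familyP => j; rewrite inE ffunE; case: ifP => [/eqP -> | _].
    by rewrite /mrg !eqxx.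
  by rewrite /mrg (negbTE (vb j)).
have vwb : wb != v.
  apply/eqP => /ffunP /(_ j0); rewrite ffunE vj0 => e.
  by move: (vb j0); rewrite -e eqxx.
have inside : forall w, w \in fam -> w != v -> w != wb ->
    (a \in sample_set w) && (b \in sample_set w).
  move=> w wf wv wwb.
  have [j1 j1n] : exists j, w j != v j.
    apply/existsP; apply: contraR wv => /existsPn H; apply/eqP/ffunP => j.
    by apply/eqP; have := H j; rewrite negbK.
  have [j2 j2n] : exists j, w j != wb j.
    apply/existsP; apply: contraR wwb => /existsPn H; apply/eqP/ffunP => j.
    by apply/eqP; have := H j; rewrite negbK.
  apply/andP; split.
    apply/imsetP; exists j2 => //; have := famE _ wf j2; move: j2n; rewrite ffunE /mrg.
    case: (eqVneq (v j2) a) => [-> | va].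
      by case: (eqVneq (w j2) b).
    case: (eqVneq (w j2) b) => [_ _ e | _ wv2 e]; first by rewrite e eqxx in va.
    by rewrite e eqxx in wv2.
  apply/imsetP; exists j1 => //; have := famE _ wf j1; rewrite /mrg.
  case: (eqVneq (w j1) b) => // _ e; by rewrite e eqxx in j1n.
have vnb : b \notin sample_set v.
  by apply/imsetP => [[j _ e]]; move: (vb j); rewrite -e eqxx.
have wbna : a \notin sample_set wb.
  apply/imsetP => [[j _]]; rewrite ffunE; case: ifP => [_ e | /negbT va e].
    by move: ab; rewrite e eqxx.
  by rewrite e eqxx in va.
have splitE : forall r : 'I_n -> R,
  \sum_(w in fam) (if (a \in sample_set w) && (b \in sample_set w) then \prod_j r (w j) else 0)
  = \sum_(w in fam) \prod_j r (w j) - (\prod_j r (v j) + \prod_j r (wb j)).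
  move=> r; rewrite [X in _ = X - _](bigD1 v) // (bigD1 wb) /=; last by rewrite wbfam vwb.
  rewrite (bigD1 v) // (bigD1 wb) /=; last by rewrite wbfam vwb.
  rewrite (negbTE vnb) (negbTE wbna) andbF /= !add0r.
  rewrite (eq_bigr (fun w : {ffun 'I_s -> 'I_n} => \prod_j r (w j))); last first.
    by move=> w /andP [/andP [wf wv] wwb]; rewrite inside.
  by rewrite addrA addrC addrK.
rewrite !splitE Toteq lerD2l lerN2.
set m := #|[pred j | v j == a]|.
have Pv : forall r : 'I_n -> R, \prod_j r (v j) = r a ^+ m * \prod_(j | v j != a) r (v j).
  by move=> r; apply: prod_split => // j /eqP.
have Pwb : forall r : 'I_n -> R, \prod_j r (wb j) = r b ^+ m * \prod_(j | v j != a) r (v j).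
  move=> r; apply: prod_split => j; rewrite ffunE; first by move=> ->.
  by move/negbTE ->.
rewrite !Pv !Pwb.
have -> : \prod_(j | v j != a) q (v j) = \prod_(j | v j != a) p (v j).
  by apply: eq_bigr => j va; rewrite qp // vb.
rewrite -!mulrDl; apply: ler_wpM2r; last exact: qpow.
by apply: prodr_ge0 => j _.
Qed.

Lemma Gf_ext (R : realFieldType) n s phi (p q : 'I_n -> R) :
  (forall i, p i = q i) -> Gf s phi p = Gf s phi q.
Proof.
move=> h; rewrite /Gf; apply: eq_bigr => w _; case: ifP => // _.
by apply: eq_bigr => j _.
Qed.

Lemma sum_lt (R : realFieldType) n (p q : 'I_n -> R) (i0 : 'I_n) :
  (forall i, p i <= q i) -> p i0 < q i0 -> \sum_i p i < \sum_i q i.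
Proof.
move=> h h0; rewrite (bigD1 i0) // [X in _ < X](bigD1 i0) //.
by apply: ltr_leD => //; apply: ler_sum => i _.
Qed.

Lemma main_ind (R : realFieldType) n s (phi : nat -> bool) :
  (forall k, phi k -> phi k.+1) -> (0 < n)%N ->
  forall k (p : 'I_n -> R), is_distr p ->
  (#|[set i | p i != n%:R^-1]| <= k)%N -> Gf s phi p <= Gf s phi (@unif R n).
Proof.
move=> phimono hn; set u := n%:R^-1 : R.
have u0 : 0 <= u by rewrite invr_ge0 ler0n.
have su : \sum_(i < n) u = 1.
  by rewrite sumr_const card_ord -mulr_natl mulfV // pnatr_eq0 -lt0n.
elim=> [|k IH] p [p0 p1] hk.
  rewrite le_eqVlt; apply/orP; left; apply/eqP; apply: Gf_ext => i.
  move: hk; rewrite leqn0 cards_eq0 => /eqP E.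
  by have := in_set0 i; rewrite -E inE => /negbFE /eqP.
case: (leqP #|[set i | p i != u]| k) => [hk' | hgt]; first exact: IH.
have [i0] : exists i, i \in [set i | p i != u].
  by apply/set0Pn; rewrite -card_gt0; apply: leq_ltn_trans hgt.
rewrite inE => pi0.
have [a pa] : exists a, u < p a.
  case: (pickP (fun i => u < p i)) => [a pa | none]; first by exists a.
  have hle : forall i, p i <= u by move=> i; rewrite leNgt none.
  have : \sum_i p i < \sum_(i < n) u.
    by apply: (sum_lt (i0 := i0)) => //; rewrite lt_neqAle pi0 hle.
  by rewrite p1 su ltxx.
have [b pb] : exists b, p b < u.
  case: (pickP (fun i => p i < u)) => [b pb | none]; first by exists b.
  have hle : forall i, u <= p i by move=> i; rewrite leNgt none.
  have : \sum_(i < n) u < \sum_i p i.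
    by apply: (sum_lt (i0 := i0)) => //; rewrite lt_neqAle eq_sym pi0 hle.
  by rewrite p1 su ltxx.
have ab : a != b.
  by apply/eqP => e; move: (lt_trans pb pa); rewrite e ltxx.
have ba : b != a by rewrite eq_sym.
pose q := fun i => if i == a then u else if i == b then p a + p b - u else p i.
have qp : forall i, i != a -> i != b -> q i = p i.
  by move=> i ia ib; rewrite /q (negbTE ia) (negbTE ib).
have qa : q a = u by rewrite /q eqxx.
have qb : q b = p a + p b - u by rewrite /q (negbTE ba) eqxx.
have qab : q a + q b = p a + p b by rewrite qa qb addrC subrK.
have qpow : forall m, q a ^+ m + q b ^+ m <= p a ^+ m + p b ^+ m.
  move=> m; rewrite qa qb; apply: pow_balance => //; exact: ltW.
apply: (le_trans (@step R n s phi p q a b phimono ab p0 qp qab qpow)).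
apply: IH.
  split.
    move=> i; case: (eqVneq i a) => [->|ia]; first by rewrite qa.
    case: (eqVneq i b) => [->|ib]; last by rewrite qp.
    by rewrite qb addrAC; apply: addr_ge0; rewrite // subr_ge0 ltW.
  rewrite -p1 (bigD1 a) // (bigD1 b) //= [X in _ = X](bigD1 a) // (bigD1 b) //=.
  rewrite !addrA qab; congr (_ + _); apply: eq_bigr => i /andP [ia ib].
  exact: qp.
have sub : [set i | q i != u] \subset [set i | p i != u] :\ a.
  apply/subsetP => i; rewrite !inE.
  case: (eqVneq i a) => [->|ia]; first by rewrite qa eqxx.
  case: (eqVneq i b) => [->|ib]; last by rewrite qp.
  by move=> _; rewrite lt_eqF.
apply: leq_trans (subset_leq_card sub) _.
move: hk; rewrite (cardsD1 a) inE gt_eqF //.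
Qed.

Theorem lemma3p3 (R : realFieldType) (n s1 : nat) (P : 'I_n -> R) (t : R) :
  (1 <= n)%N -> (1 <= s1)%N -> is_distr P ->
  prob_iid P (fun w : {ffun 'I_s1 -> 'I_n} => t <= @Un_mass R n (sample_set w))
  <= prob_iid (@unif R n) (fun w : {ffun 'I_s1 -> 'I_n} => t <= @Un_mass R n (sample_set w)).
Proof.
move=> hn _ hP.
pose phi := fun k : nat => t <= k%:R / n%:R :> R.
have phimono : forall k, phi k -> phi k.+1.
  move=> k; rewrite /phi => h; apply: (le_trans h); apply: ler_wpM2r.
    by rewrite invr_ge0 ler0n.
  by rewrite ler_nat.
have := @main_ind R n s1 phi phimono hn _ P hP (leqnn _).
by rewrite /Gf /prob_iid !(big_mkcond (fun w => t <= _)).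
Qed.
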